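(* Let $F$ be a field of characteristic not $2$, $D$ a division quaternion algebra over $F$, and let $G=D^\times\times D^\times\times\mathrm{GL}_2$ act on $V=D\oplus D$ by $(x,y)\cdot\rho(g_1,g_2,g_3)=(g_1^{-1}xg_2,\,g_1^{-1}yg_2)g_3$. Then there are exactly two singular $G(F)$-orbits in $V(F)$ (orbits of elements $x$ with $P(x)=0$): the orbit of $(0,0)$ and the orbit of $(0,1)$.
   Context: Here $(x,y)g_3$ for $g_3=\left(\begin{smallmatrix}a&b\\c&d\end{smallmatrix}\right)$ means $(ax+cy,\,bx+dy)$. $x\mapsto x^\iota$ is the standard involution of $D$, and $P(x,y)=-\mathrm{Nrd}(xy^\iota-yx^\iota)$, where $\mathrm{Nrd}(z)=zz^\iota$ is the reduced norm. *)

(* Defs.v *)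
From HB Require Import structures.
From mathcomp Require Import all_boot all_order all_algebra.
Set Implicit Arguments. Unset Strict Implicit. Unset Printing Implicit Defensive.
Import GRing.Theory.
Local Open Scope ring_scope.

(* The quaternion algebra D = (a,b)_F over a field F (char F <> 2):
   F-basis 1, i, j, k with i^2 = a, j^2 = b, k = ij = -ji.
   Elements are x0 + x1 i + x2 j + x3 k. *)
Record quat (F : Type) := Quat { q0 : F; q1 : F; q2 : F; q3 : F }.

Section Quat.
Variables (F : fieldType) (a b : F).

Definition qzero : quat F := Quat 0 0 0 0.
Definition qone : quat F := Quat 1 0 0 0.

Definition qadd (x y : quat F) : quat F :=
  Quat (q0 x + q0 y) (q1 x + q1 y) (q2 x + q2 y) (q3 x + q3 y).
Definition qopp (x : quat F) : quat F :=
  Quat (- q0 x) (- q1 x) (- q2 x) (- q3 x).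
Definition qsub (x y : quat F) : quat F := qadd x (qopp y).
Definition qscale (c : F) (x : quat F) : quat F :=
  Quat (c * q0 x) (c * q1 x) (c * q2 x) (c * q3 x).

Definition qmul (x y : quat F) : quat F :=
  Quat (q0 x * q0 y + a * q1 x * q1 y + b * q2 x * q2 y - a * b * q3 x * q3 y)
       (q0 x * q1 y + q1 x * q0 y - b * q2 x * q3 y + b * q3 x * q2 y)
       (q0 x * q2 y + q2 x * q0 y + a * q1 x * q3 y - a * q3 x * q1 y)
       (q0 x * q3 y + q3 x * q0 y + q1 x * q2 y - q2 x * q1 y).

Definition qconj (x : quat F) : quat F :=
  Quat (q0 x) (- q1 x) (- q2 x) (- q3 x).

(* reduced norm: z z^iota, which is a scalar; we take its F-component *)
Definition nrd (z : quat F) : F := q0 (qmul z (qconj z)).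

Definition qunit (z : quat F) : Prop :=
  exists w, qmul z w = qone /\ qmul w z = qone.

Definition quat_division : Prop :=
  forall z : quat F, z <> qzero -> qunit z.

Definition Pform (v : quat F * quat F) : F :=
  - nrd (qsub (qmul v.1 (qconj v.2)) (qmul v.2 (qconj v.1))).

Definition i0 : 'I_2 := @Ordinal 2 0 isT.
Definition i1 : 'I_2 := @Ordinal 2 1 isT.

(* (x,y) . rho(g1,g2,g3) = (g1^{-1} x g2, g1^{-1} y g2) g3, where g1inv = g1^{-1}
   and (x,y) g3 = (a3 x + c3 y, b3 x + d3 y) for g3 = [[a3,b3],[c3,d3]]. *)
Definition rho_act (g1inv g2 : quat F) (g3 : 'M[F]_2) (v : quat F * quat F)
    : quat F * quat F :=
  let x' := qmul (qmul g1inv v.1) g2 in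
  let y' := qmul (qmul g1inv v.2) g2 in
  (qadd (qscale (g3 i0 i0) x') (qscale (g3 i1 i0) y'),
   qadd (qscale (g3 i0 i1) x') (qscale (g3 i1 i1) y')).

Definition G_orbit_mem (v w : quat F * quat F) : Prop :=
  exists (g1 g1inv g2 : quat F) (g3 : 'M[F]_2),
    [/\ qmul g1 g1inv = qone, qmul g1inv g1 = qone, qunit g2,
        \det g3 != 0 & w = rho_act g1inv g2 g3 v].
End Quat.
Arguments qzero F : clear implicits.
Arguments qone F : clear implicits.

(* Main.v *)
Require Import Defs.
From HB Require Import structures.
From mathcomp Require Import all_boot all_order all_algebra.
From mathcomp Require Import ring.
From Stdlib Require Import Classical.
Local Open Scope ring_scope.
Import GRing.Theory.

Definition mx22 {F : fieldType} (p q r s : F) : 'M[F]_2 :=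
  \matrix_(i < 2, j < 2) (if i == i0 then (if j == i0 then p else q)
                                   else (if j == i0 then r else s)).

Lemma det22 (F : fieldType) (p q r s : F) : \det (mx22 p q r s) = p * s - q * r.
Proof.
rewrite (expand_det_row _ ord0) !big_ord_recl big_ord0 /cofactor !det_mx11 !mxE /=.
rewrite /bump /= expr0 expr1; ring.
Qed.

Section S.
Variables (F : fieldType) (a b : F).

Lemma quatE (x y : quat F) : q0 x = q0 y -> q1 x = q1 y -> q2 x = q2 y -> q3 x = q3 y -> x = y.
Proof. by case: x => ????; case: y => ???? /= -> -> -> ->. Qed.

Lemma qmulA x y z : qmul a b (qmul a b x y) z = qmul a b x (qmul a b y z).
Proof. case: x => ????; case: y => ????; case: z => ????; apply: quatE => /=; ring. Qed.

Lemma conj_mul y : qmul a b (qconj y) y = Quat (nrd a b y) 0 0 0.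
Proof. case: y => ????; rewrite /nrd; apply: quatE => /=; ring. Qed.

Lemma nrd_nz y : quat_division a b -> y <> qzero F -> nrd a b y <> 0.
Proof.
move=> hd hy hn; case: (hd y hy) => w [hw _]; apply: hy.
have h1 : qconj y = qmul a b (qmul a b (qconj y) y) w.
  rewrite qmulA hw; case: y {hw hn} => ????; apply: quatE => /=; ring.
have h0 : qconj y = qzero F.
  rewrite h1 conj_mul hn; case: w {hw h1} => ????; apply: quatE => /=; ring.
case: y h0 {hw hn h1} => y0 y1 y2 y3 [] -> /eqP; rewrite oppr_eq0 => /eqP ->
   /eqP; rewrite oppr_eq0 => /eqP -> /eqP; rewrite oppr_eq0 => /eqP ->.
by [].
Qed.

Lemma qone_unit : qmul a b (qone F) (qone F) = qone F.
Proof. apply: quatE => /=; ring. Qed.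

Lemma orbit_eq g2 (p q r s : F) v :
  rho_act a b (qone F) g2 (mx22 p q r s) v =
  (qadd (qscale p (qmul a b (qmul a b (qone F) v.1) g2)) (qscale r (qmul a b (qmul a b (qone F) v.2) g2)),
   qadd (qscale q (qmul a b (qmul a b (qone F) v.1) g2)) (qscale s (qmul a b (qmul a b (qone F) v.2) g2))).
Proof. by rewrite /rho_act !mxE. Qed.

Lemma e_all x y :
  [/\ q1 (qsub (qmul a b x (qconj y)) (qmul a b y (qconj x))) = 2%:R * q1 (qmul a b x (qconj y)),
      q2 (qsub (qmul a b x (qconj y)) (qmul a b y (qconj x))) = 2%:R * q2 (qmul a b x (qconj y))
    & q3 (qsub (qmul a b x (qconj y)) (qmul a b y (qconj x))) = 2%:R * q3 (qmul a b x (qconj y))].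
Proof. case: x => ????; case: y => ????; split => /=; ring. Qed.

Lemma scale_conj x y n : qmul a b (Quat n 0 0 0) y = qscale n y /\ qmul a b x (Quat n 0 0 0) = qscale n x.
Proof. case: x => ????; case: y => ????; split; apply: quatE => /=; ring. Qed.

Lemma one_mul x : qmul a b (qmul a b (qone F) (qzero F)) x = qzero F
  /\ qmul a b (qmul a b (qone F) (qone F)) x = x.
Proof. case: x => ????; split; apply: quatE => /=; ring. Qed.

Lemma qs_id x (p q : F) : qadd (qscale p (qzero F)) (qscale q x) = qscale q x.
Proof. case: x => ????; apply: quatE => /=; ring. Qed.

Lemma qs1 (x : quat F) : qscale 1 x = x.
Proof. case: x => ????; apply: quatE => /=; ring. Qed.

Lemma qs0 (x : quat F) : qscale 0 x = qzero F.
Proof. case: x => ????; apply: quatE => /=; ring. Qed.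
End S.

Theorem proposition2p2 (F : fieldType) (a b : F)
  (hchar : (2%:R : F) != 0) (ha : a != 0) (hb : b != 0)
  (hdiv : quat_division a b) :
  [/\ Pform a b (qzero F, qzero F) = 0,
      Pform a b (qzero F, qone F) = 0,
      ~ G_orbit_mem a b (qzero F, qzero F) (qzero F, qone F)
    & forall v : quat F * quat F, Pform a b v = 0 ->
        G_orbit_mem a b (qzero F, qzero F) v \/ G_orbit_mem a b (qzero F, qone F) v].
Proof.
split.
- rewrite /Pform /nrd /=; ring.
- rewrite /Pform /nrd /=; ring.
- move=> [g1 [g1i [g2 [g3 [_ _ _ _ h]]]]].
  have := congr1 (fun p => q0 p.2) h; rewrite /rho_act /= => h0.
  have : (1:F) = 0 by rewrite h0; ring.
  by move/eqP; rewrite oner_eq0.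
case=> x y hP.
set z := qmul a b x (qconj y).
set u := qsub (qmul a b x (qconj y)) (qmul a b y (qconj x)).
have hu : u = qzero F.
  case: (classic (u = qzero F)) => // hu; exfalso.
  apply: (@nrd_nz F a b u hdiv hu); move: hP; rewrite /Pform /= -/u => /eqP.
  by rewrite oppr_eq0 => /eqP.
have [e1 e2 e3] := @e_all F a b x y; rewrite -/z -/u in e1 e2 e3.
have z1 : q1 z = 0 by move: e1; rewrite hu /= => /esym /eqP; rewrite mulf_eq0 (negbTE hchar) => /eqP.
have z2 : q2 z = 0 by move: e2; rewrite hu /= => /esym /eqP; rewrite mulf_eq0 (negbTE hchar) => /eqP.
have z3 : q3 z = 0 by move: e3; rewrite hu /= => /esym /eqP; rewrite mulf_eq0 (negbTE hchar) => /eqP.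
have hz : z = Quat (q0 z) 0 0 0 by apply: quatE.
case: (classic (y = qzero F)) => hy.
- subst y.
  case: (classic (x = qzero F)) => hx.
  + subst x; left; exists (qone F), (qone F), (qone F), (mx22 1 0 0 1).
    split; rewrite ?qone_unit //.
    * by exists (qone F); rewrite qone_unit.
    * by rewrite det22 mulr1 mulr0 subr0 oner_eq0.
    * by rewrite orbit_eq /=; congr pair; apply: quatE => /=; ring.
  + right; exists (qone F), (qone F), x, (mx22 0 1 1 0).
    split; rewrite ?qone_unit //.
    * exact: hdiv.
    * by rewrite det22 mulr0 mulr1 sub0r oppr_eq0 oner_eq0.
    * rewrite orbit_eq /=; have [-> ->] := @one_mul F a b x.
      by rewrite !qs_id qs1 qs0.
- right.
  have hn : nrd a b y != 0 by apply/eqP; exact: nrd_nz.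
  have hs : qscale (nrd a b y) x = qscale (q0 z) y.
    have [_ <-] := @scale_conj F a b x y (nrd a b y).
    rewrite -conj_mul -qmulA -/z hz.
    by have [-> _] := @scale_conj F a b x y (q0 z).
  have hx : x = qscale (q0 z / nrd a b y) y.
    move: hn hs; generalize (nrd a b y) (q0 z) => n t hn.
    case: x {z u hu hP e1 e2 e3 z1 z2 z3 hz} => x0 x1 x2 x3; case: y {hy} => y0 y1 y2 y3 /= [h0 h1 h2 h3].
    apply: quatE => /=.
    + by rewrite -[x0](mulKf hn) h0; field.
    + by rewrite -[x1](mulKf hn) h1; field.
    + by rewrite -[x2](mulKf hn) h2; field.
    + by rewrite -[x3](mulKf hn) h3; field.
  exists (qone F), (qone F), y, (mx22 1 0 (q0 z / nrd a b y) 1).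
  split; rewrite ?qone_unit //.
  * exact: hdiv.
  * by rewrite det22 mulr1 mul0r subr0 oner_eq0.
  * rewrite orbit_eq /=; have [-> ->] := @one_mul F a b y.
    by rewrite !qs_id qs1 -hx.
Qed.
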